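(* Let $L>0$, $\mu\in(-\infty,0]$, $\kappa:=\mu/L$, $N\ge1$, $h_0,\dots,h_{N-1}\in(0,1]$ and $\Delta>0$, and set $p(h,\kappa)=2h-h^2\frac{-\kappa}{1-\kappa}$. Consider the gradient method $x_{i+1}=x_i-\frac{h_i}{L}\nabla f(x_i)$, $i=0,\dots,N-1$. Then: (i) there exist $f\in\mathcal{F}_{\mu,L}(\mathbb{R})$ and $x_0\in\mathbb{R}$ such that $f(x_0)-f(x_N)=\Delta$ and $\min_{0\le i\le N}|f'(x_i)|^2=\frac{2L\Delta}{\sum_{i=0}^{N-1}p(h_i,\kappa)}$; (ii) there exist $f\in\mathcal{F}_{\mu,L}(\mathbb{R})$ with global minimum value $f_*$ and $x_0\in\mathbb{R}$ such that $f(x_0)-f_*=\Delta$ and $\min_{0\le i\le N}|f'(x_i)|^2=\frac{2L\Delta}{1+\sum_{i=0}^{N-1}p(h_i,\kappa)}$. That is, for step sizes in $(0,1]$ the upper bounds $\min_{0\le i\le N}\|\nabla f(x_i)\|^2\le\frac{2L[f(x_0)-f(x_N)]}{\sum_i p(h_i,\kappa)}$ and $\min_{0\le i\le N}\|\nabla f(x_i)\|^2\le\frac{2L[f(x_0)-f_*]}{1+\sum_i p(h_i,\kappa)}$, valid for all $f\in\mathcal{F}_{\mu,L}$, are attained.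
   Context: For $L>0$ and $\mu\le L$, $\mathcal{F}_{\mu,L}(\mathbb{R}^d)$ denotes the class of differentiable functions $f:\mathbb{R}^d\to\mathbb{R}$ such that both $\frac L2\|\cdot\|^2-f$ and $f-\frac{\mu}{2}\|\cdot\|^2$ are convex. *)

(* Defs.v *)
From Stdlib Require Import Reals.
From Coquelicot Require Import Coquelicot.
Open Scope R_scope.

Definition convex_fun (g : R -> R) : Prop :=
  forall x y t, 0 <= t <= 1 ->
    g (t * x + (1 - t) * y) <= t * g x + (1 - t) * g y.

Definition F_class (mu L : R) (f : R -> R) : Prop :=
  (forall x, ex_derive f x) /\
  convex_fun (fun x => L / 2 * x ^ 2 - f x) /\
  convex_fun (fun x => f x - mu / 2 * x ^ 2).

Fixpoint gd_iter (f : R -> R) (L : R) (h : nat -> R) (x0 : R) (i : nat) : R :=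
  match i with
  | O => x0
  | S j => gd_iter f L h x0 j - h j / L * Derive f (gd_iter f L h x0 j)
  end.

Fixpoint min_upto (g : nat -> R) (n : nat) : R :=
  match n with
  | O => g O
  | S m => Rmin (min_upto g m) (g (S m))
  end.

Fixpoint sum_lt (g : nat -> R) (n : nat) : R :=
  match n with
  | O => 0
  | S m => sum_lt g m + g m
  end.

Definition pfun (h kappa : R) : R := 2 * h - h ^ 2 * (- kappa / (1 - kappa)).

(* Main.v *)
Require Import Defs.
From Stdlib Require Import Reals Lra Psatz Lia Arith.
From Coquelicot Require Import Coquelicot.
Open Scope R_scope.

Definition SB (mu L : R) (phi : R -> R) : Prop :=
  forall x y, x <= y -> mu * (y - x) <= phi y - phi x <= L * (y - x).

Lemma SB_lin mu L s c0 c1 : mu <= s <= L -> SB mu L (fun x => s * (x - c0) + c1).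
Proof. intros Hs x y Hxy. split; nra. Qed.

Lemma SB_max mu L f g : SB mu L f -> SB mu L g -> SB mu L (fun x => Rmax (f x) (g x)).
Proof.
  intros Hf Hg x y Hxy. specialize (Hf x y Hxy). specialize (Hg x y Hxy).
  unfold Rmax; repeat destruct Rle_dec; lra.
Qed.

Lemma SB_min mu L f g : SB mu L f -> SB mu L g -> SB mu L (fun x => Rmin (f x) (g x)).
Proof.
  intros Hf Hg x y Hxy. specialize (Hf x y Hxy). specialize (Hg x y Hxy).
  unfold Rmin; repeat destruct Rle_dec; lra.
Qed.

Lemma SB_const mu L c : mu <= 0 -> 0 <= L -> SB mu L (fun _ => c).
Proof. intros H1 H2 x y Hxy. split; nra. Qed.

Lemma SB_plus_c mu L f c : SB mu L f -> SB mu L (fun x => c + f x).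
Proof. intros Hf x y Hxy. specialize (Hf x y Hxy). lra. Qed.

Lemma SB_cont mu L f x : mu <= 0 -> 0 <= L -> SB mu L f -> continuous f x.
Proof.
  intros Hmu HL Hf.
  apply continuity_pt_filterlim.
  intros eps Heps. exists (eps / (L - mu + 1)). split.
  - apply Rdiv_lt_0_compat; lra.
  - intros y [_ Hy]. simpl in *. unfold R_dist in *.
    assert (Hb : Rabs (f y - f x) <= (L - mu) * Rabs (y - x)).
    { destruct (Rle_dec x y) as [H|H].
      - specialize (Hf x y H). rewrite (Rabs_pos_eq (y - x)) by lra.
        apply Rabs_le; nra.
      - assert (H' : y <= x) by lra. specialize (Hf y x H').
        rewrite (Rabs_left1 (y - x)) by lra. apply Rabs_le; nra. }
    assert (Rabs (y - x) * (L - mu + 1) < eps).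
    { apply (Rmult_lt_compat_r (L - mu + 1)) in Hy; [|lra].
      unfold Rdiv in Hy. rewrite Rmult_assoc, Rinv_l in Hy; lra. }
    assert (0 <= Rabs (y - x)) by apply Rabs_pos. nra.
Qed.

Lemma is_derive_RInt_all (phi : R -> R) x :
  (forall z, continuous phi z) -> is_derive (fun t => RInt phi 0 t) x (phi x).
Proof.
  intros Hc. apply (is_derive_RInt phi (fun t => RInt phi 0 t) 0 x).
  - apply filter_forall. intros b. apply (RInt_correct (V:=R_CompleteNormedModule)).
    apply ex_RInt_continuous. intros; apply Hc.
  - apply Hc.
Qed.

Lemma MVT' (G G' : R -> R) a b :
  (forall x, is_derive G x (G' x)) -> a <= b ->
  exists c, a <= c <= b /\ G b - G a = G' c * (b - a).
Proof.
  intros HG Hab.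
  destruct (MVT_gen G a b G') as [c [Hc Heq]].
  - intros; apply HG.
  - intros. apply continuity_pt_filterlim. apply (ex_derive_continuous (K:=R_AbsRing) (V:=R_NormedModule)).
    eexists; apply HG.
  - exists c. rewrite Rmin_left, Rmax_right in Hc by lra. auto.
Qed.

Lemma convex_of_deriv (G G' : R -> R) :
  (forall x, is_derive G x (G' x)) -> (forall x y, x <= y -> G' x <= G' y) ->
  convex_fun G.
Proof.
  intros HG Hm x y t Ht. set (z := t * x + (1 - t) * y).
  assert (Ht1 : 0 <= t * (1 - t)) by nra.
  destruct (Rle_dec x y) as [H|H].
  - assert (x <= z <= y) by (unfold z; nra).
    destruct (MVT' G G' x z HG) as [c1 [Hc1 E1]]; [lra|].
    destruct (MVT' G G' z y HG) as [c2 [Hc2 E2]]; [lra|].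
    assert (G' c1 <= G' c2) by (apply Hm; lra).
    assert (z - x = (1 - t) * (y - x)) by (unfold z; ring).
    assert (y - z = t * (y - x)) by (unfold z; ring).
    assert (0 <= t * (1 - t) * (y - x) * (G' c2 - G' c1)).
    { apply Rmult_le_pos; [apply Rmult_le_pos|]; lra. }
    nra.
  - assert (y <= z <= x) by (unfold z; nra).
    destruct (MVT' G G' z x HG) as [c1 [Hc1 E1]]; [lra|].
    destruct (MVT' G G' y z HG) as [c2 [Hc2 E2]]; [lra|].
    assert (G' c2 <= G' c1) by (apply Hm; lra).
    assert (x - z = (1 - t) * (x - y)) by (unfold z; ring).
    assert (z - y = t * (x - y)) by (unfold z; ring).
    assert (0 <= t * (1 - t) * (x - y) * (G' c1 - G' c2)).
    { apply Rmult_le_pos; [apply Rmult_le_pos|]; lra. }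
    nra.
Qed.


Definition cc (L mu : R) := - mu / (L - mu).

Fixpoint xpos (L g : R) (h : nat -> R) (i : nat) : R :=
  match i with O => 0 | S j => xpos L g h j + h j * g / L end.

Definition tooth (L mu p b x : R) : R :=
  Rmax 0 (Rmin (Rmax 0 (L * (x - p) + 0)) (mu * (x - (p + b)) + L * b)).

Definition T (L mu g : R) (h : nat -> R) (j : nat) (x : R) : R :=
  tooth L mu (xpos L g h j) (cc L mu * (h j * g / L)) x.

Fixpoint M (L mu g : R) (h : nat -> R) (k : nat) (x : R) : R :=
  match k with O => 0 | S k' => Rmax (M L mu g h k' x) (T L mu g h k' x) end.

Definition phi (L mu g : R) (h : nat -> R) (N : nat) (tail : R -> R) (x : R) : R :=
  - g + Rmax (M L mu g h N x) (tail x).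

Lemma SB_tooth mu L p b : mu <= 0 -> 0 <= L -> SB mu L (tooth L mu p b).
Proof.
  intros Hmu HL. unfold tooth.
  apply SB_max; [apply SB_const; auto|].
  apply SB_min; [apply SB_max; [apply SB_const; auto| apply SB_lin; lra]|apply SB_lin; lra].
Qed.

Lemma SB_M mu L g h k : mu <= 0 -> 0 <= L -> SB mu L (M L mu g h k).
Proof.
  intros Hmu HL. induction k; simpl.
  - apply SB_const; auto.
  - apply SB_max; auto. apply SB_tooth; auto.
Qed.

Lemma SB_phi mu L g h N tail : mu <= 0 -> 0 <= L -> SB mu L tail ->
  SB mu L (phi L mu g h N tail).
Proof.
  intros Hmu HL Ht. unfold phi. apply SB_plus_c. apply SB_max; auto. apply SB_M; auto.
Qed.

Lemma cc_bounds L mu : 0 < L -> mu <= 0 -> 0 <= cc L mu < 1.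
Proof.
  intros HL Hmu. unfold cc. split.
  - apply Rmult_le_pos; [lra|]. left; apply Rinv_0_lt_compat; lra.
  - apply (Rmult_lt_reg_r (L - mu)); [lra|]. unfold Rdiv.
    rewrite Rmult_assoc, Rinv_l by lra. lra.
Qed.

Lemma cc_id L mu : 0 < L -> mu <= 0 -> cc L mu * (L - mu) = - mu.
Proof. intros. unfold cc. field. lra. Qed.



Lemma tooth_facts L mu p d x : 0 < L -> mu <= 0 -> 0 <= d ->
  let b := cc L mu * d in
  (x <= p -> tooth L mu p b x = 0) /\
  (p + d <= x -> tooth L mu p b x = 0) /\
  (0 <= tooth L mu p b x <= L * b) /\
  (p <= x <= p + b -> tooth L mu p b x = L * (x - p)) /\
  (p + b <= x <= p + d -> tooth L mu p b x = mu * (x - (p + b)) + L * b).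
Proof.
  intros HL Hmu Hd b.
  pose proof (cc_bounds L mu HL Hmu) as Hc. pose proof (cc_id L mu HL Hmu) as Hi.
  assert (Hid : L * b + mu * (d - b) = 0) by (unfold b; nra).
  assert (Hb : 0 <= b <= d) by (unfold b; nra).
  unfold tooth, Rmax, Rmin.
  repeat split; intros; repeat destruct Rle_dec; nra.
Qed.


Lemma d_pos L g (h : nat -> R) N j : 0 < L -> 0 < g ->
  (forall i, (i < N)%nat -> 0 < h i <= 1) -> (j < N)%nat -> 0 < h j * g / L.
Proof.
  intros HL Hg Hh Hj. specialize (Hh j Hj).
  apply Rdiv_lt_0_compat; [nra|lra].
Qed.

Lemma pos_mono L g h N j k : 0 < L -> 0 < g ->
  (forall i, (i < N)%nat -> 0 < h i <= 1) -> (j <= k <= N)%nat ->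
  xpos L g h j <= xpos L g h k.
Proof.
  intros HL Hg Hh Hjk. induction k.
  - assert (j = 0)%nat by lia. subst. lra.
  - destruct (Nat.eq_dec j (S k)). { subst; lra. }
    simpl. assert (0 < h k * g / L) by (apply (d_pos L g h N); auto; lia).
    assert (xpos L g h j <= xpos L g h k) by (apply IHk; lia). lra.
Qed.

Lemma T_facts L mu g h N j x : 0 < L -> mu <= 0 -> 0 < g ->
  (forall i, (i < N)%nat -> 0 < h i <= 1) -> (j < N)%nat ->
  (x <= xpos L g h j -> T L mu g h j x = 0) /\
  (xpos L g h (S j) <= x -> T L mu g h j x = 0) /\
  (0 <= T L mu g h j x <= g).
Proof.
  intros HL Hmu Hg Hh Hj.
  pose proof (d_pos L g h N j HL Hg Hh Hj) as Hd.
  destruct (tooth_facts L mu (xpos L g h j) (h j * g / L) x HL Hmu) as [A1 [A2 [A3 _]]]; [lra|].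
  unfold T. simpl. split; [exact A1|split; [exact A2|split]].
  - apply A3.
  - pose proof (cc_bounds L mu HL Hmu). specialize (Hh j Hj).
    assert (L * (cc L mu * (h j * g / L)) = cc L mu * h j * g) by (field; lra).
    destruct A3 as [_ A3]. rewrite H0 in A3. assert (cc L mu * h j <= 1) by nra. assert (cc L mu * h j * g <= g) by nra. lra.
Qed.

Lemma M_nonneg L mu g h k x : 0 <= M L mu g h k x.
Proof. induction k; simpl. lra. unfold Rmax; destruct Rle_dec; lra. Qed.

Lemma M_le L mu g h N k x : 0 < L -> mu <= 0 -> 0 < g ->
  (forall i, (i < N)%nat -> 0 < h i <= 1) -> (k <= N)%nat -> M L mu g h k x <= g.
Proof.
  intros HL Hmu Hg Hh Hk. induction k; simpl. lra.
  destruct (T_facts L mu g h N k x) as [_ [_ H3]]; auto; try lia.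
  assert (M L mu g h k x <= g) by (apply IHk; lia).
  unfold Rmax; destruct Rle_dec; lra.
Qed.

Lemma M_zero L mu g h k x :
  (forall j, (j < k)%nat -> T L mu g h j x = 0) -> M L mu g h k x = 0.
Proof.
  intros H. induction k; simpl. auto.
  rewrite IHk by (intros; apply H; lia). rewrite H by lia. unfold Rmax; destruct Rle_dec; lra.
Qed.

Lemma M_single L mu g h k i x : (i < k)%nat -> 0 <= T L mu g h i x ->
  (forall j, (j < k)%nat -> j <> i -> T L mu g h j x = 0) -> M L mu g h k x = T L mu g h i x.
Proof.
  intros Hi Hn H. induction k. lia.
  simpl. destruct (Nat.eq_dec i k).
  - subst. rewrite M_zero. unfold Rmax; destruct Rle_dec; lra.
    intros; apply H; lia.
  - rewrite IHk by (try lia; intros; apply H; lia). rewrite (H k) by lia.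
    unfold Rmax; destruct Rle_dec; lra.
Qed.

Lemma T_zero_l L mu g h N j x : 0 < L -> mu <= 0 -> 0 < g ->
  (forall i, (i < N)%nat -> 0 < h i <= 1) -> (j < N)%nat ->
  x <= xpos L g h j -> T L mu g h j x = 0.
Proof. intros. destruct (T_facts L mu g h N j x) as [A _]; auto. Qed.

Lemma T_zero_r L mu g h N j x : 0 < L -> mu <= 0 -> 0 < g ->
  (forall i, (i < N)%nat -> 0 < h i <= 1) -> (j < N)%nat ->
  xpos L g h (S j) <= x -> T L mu g h j x = 0.
Proof. intros. destruct (T_facts L mu g h N j x) as [_ [A _]]; auto. Qed.


Lemma piece (f F phi F' : R -> R) a b :
  (forall x, is_derive f x (phi x)) -> (forall x, is_derive F x (F' x)) -> a <= b ->
  (forall x, a <= x <= b -> phi x = F' x) -> f b - f a = F b - F a.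
Proof.
  intros Hf HF Hab Heq.
  destruct (MVT_gen (fun x => f x - F x) a b (fun x => phi x - F' x)) as [c [Hc E]].
  - intros. apply (is_derive_minus f F); auto.
  - intros. apply continuity_pt_filterlim.
    apply (ex_derive_continuous (K:=R_AbsRing) (V:=R_NormedModule) (fun x => f x - F x)).
    eexists. apply (is_derive_minus f F); auto.
  - rewrite Rmin_left, Rmax_right in Hc by lra. rewrite Heq in E by lra. lra.
Qed.

Lemma quad_deriv (p c0 c1 : R) x :
  is_derive (fun x => c0 * (x - p) + c1 * (x - p) ^ 2 / 2) x (c0 + c1 * (x - p)).
Proof. auto_derive; auto. change (c0 * 1 + c1 * (1 * ((1 + 1) * ((x + - p) * 1))) * / 2 = c0 + c1 * (x - p)). field. Qed.

Lemma phi_at_pos L mu g h N tail i : 0 < L -> mu <= 0 -> 0 < g ->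
  (forall i, (i < N)%nat -> 0 < h i <= 1) ->
  (forall x, x <= xpos L g h N -> tail x = 0) -> (i <= N)%nat ->
  phi L mu g h N tail (xpos L g h i) = - g.
Proof.
  intros HL Hmu Hg Hh Ht Hi. unfold phi.
  rewrite M_zero. rewrite Ht. unfold Rmax; destruct Rle_dec; lra.
  apply (pos_mono L g h N); auto; lia.
  intros j Hj. destruct (le_lt_dec i j).
  - apply (T_zero_l L mu g h N j); auto; try lia. apply (pos_mono L g h N); auto; lia.
  - apply (T_zero_r L mu g h N j); auto; try lia. apply (pos_mono L g h N); auto; lia.
Qed.

Lemma phi_on_step L mu g h N tail i x : 0 < L -> mu <= 0 -> 0 < g ->
  (forall i, (i < N)%nat -> 0 < h i <= 1) ->
  (forall x, x <= xpos L g h N -> tail x = 0) -> (i < N)%nat ->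
  xpos L g h i <= x <= xpos L g h (S i) ->
  phi L mu g h N tail x = - g + T L mu g h i x.
Proof.
  intros HL Hmu Hg Hh Ht Hi Hx. unfold phi.
  destruct (T_facts L mu g h N i x) as [_ [_ Hb]]; auto.
  rewrite (M_single L mu g h N i x); [ | lia | lra | ].
  rewrite Ht. unfold Rmax; destruct Rle_dec; lra.
  assert (xpos L g h (S i) <= xpos L g h N) by (apply (pos_mono L g h N); auto; lia). lra.
  intros j Hj Hji. destruct (le_lt_dec i j).
  - apply (T_zero_l L mu g h N j); auto; try lia.
    assert (xpos L g h (S i) <= xpos L g h j) by (apply (pos_mono L g h N); auto; lia). lra.
  - apply (T_zero_r L mu g h N j); auto; try lia.
    assert (xpos L g h (S j) <= xpos L g h i) by (apply (pos_mono L g h N); auto; lia). lra.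
Qed.


Lemma step_identity L mu g hh : 0 < L -> mu <= 0 ->
  let d := hh * g / L in let b := cc L mu * d in
  (- g * b + L * b ^ 2 / 2) + ((- g + L * b) * (d - b) + mu * (d - b) ^ 2 / 2)
  = - (g ^ 2 / (2 * L)) * pfun hh (mu / L).
Proof.
  intros HL Hmu d b. unfold b, d, cc, pfun. field. split; lra.
Qed.

Lemma step_decrease L mu g h N tail (f : R -> R) i : 0 < L -> mu <= 0 -> 0 < g ->
  (forall i, (i < N)%nat -> 0 < h i <= 1) ->
  (forall x, x <= xpos L g h N -> tail x = 0) -> (i < N)%nat ->
  (forall x, is_derive f x (phi L mu g h N tail x)) ->
  f (xpos L g h (S i)) - f (xpos L g h i) = - (g ^ 2 / (2 * L)) * pfun (h i) (mu / L).
Proof.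
  intros HL Hmu Hg Hh Ht Hi Hf.
  pose proof (d_pos L g h N i HL Hg Hh Hi) as Hd.
  set (p := xpos L g h i). set (d := h i * g / L). set (b := cc L mu * d).
  assert (HS : xpos L g h (S i) = p + d) by reflexivity.
  pose proof (cc_bounds L mu HL Hmu) as Hc.
  assert (Hd2 : 0 < d) by exact Hd. assert (Hb : 0 <= b <= d). { unfold b. destruct Hc. split; [apply Rmult_le_pos; lra|]. rewrite <- (Rmult_1_l d) at 2. apply Rmult_le_compat_r; lra. }
  rewrite <- (step_identity L mu g (h i) HL Hmu). fold d. fold b.
  rewrite HS.
  replace (f (p + d) - f p) with ((f (p + d) - f (p + b)) + (f (p + b) - f p)) by ring.
  rewrite (piece f (fun x => (- g + L * b) * (x - (p + b)) + mu * (x - (p + b)) ^ 2 / 2)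
             (phi L mu g h N tail) (fun x => (- g + L * b) + mu * (x - (p + b))) (p + b) (p + d));
    [ | exact Hf | intros; apply quad_deriv | lra | ].
  rewrite (piece f (fun x => (- g) * (x - p) + L * (x - p) ^ 2 / 2)
             (phi L mu g h N tail) (fun x => (- g) + L * (x - p)) p (p + b));
    [ | exact Hf | intros; apply quad_deriv | lra | ].
  - cbv beta. clearbody p d b. field.
  - intros x Hx. rewrite (phi_on_step L mu g h N tail i x HL Hmu Hg Hh Ht Hi); [|rewrite HS; fold p; split; lra].
    destruct (tooth_facts L mu p d x HL Hmu) as [_ [_ [_ [T3 _]]]]; [lra|].
    unfold T. change (- g + tooth L mu p (cc L mu * d) x = - g + L * (x - p)). rewrite T3; [field| unfold b in Hx; lra].
  - intros x Hx. rewrite (phi_on_step L mu g h N tail i x HL Hmu Hg Hh Ht Hi); [|rewrite HS; fold p; split; lra].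
    destruct (tooth_facts L mu p d x HL Hmu) as [_ [_ [_ [_ T4]]]]; [lra|].
    unfold T. change (- g + tooth L mu p (cc L mu * d) x = - g + L * b + mu * (x - (p + b))). rewrite T4; [unfold b; field| unfold b in Hx; lra].
Qed.


Lemma F_class_of mu L (ph : R -> R) : mu <= 0 -> 0 < L -> SB mu L ph ->
  F_class mu L (fun x => RInt ph 0 x).
Proof.
  intros Hmu HL Hs.
  assert (Hc : forall z, continuous ph z) by (intros; apply (SB_cont mu L); auto; lra).
  assert (Hd : forall x, is_derive (fun x => RInt ph 0 x) x (ph x)) by (intros; apply is_derive_RInt_all; auto).
  split; [|split].
  - intros x. eexists. apply Hd.
  - apply (convex_of_deriv _ (fun x => L * x - ph x)).
    + intros x. apply (is_derive_minus (fun x => L / 2 * x ^ 2) (fun x => RInt ph 0 x)); [|apply Hd].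
      auto_derive; auto. match goal with |- ?a = ?c => change (@eq R a c) end. field.
    + intros x y Hxy. specialize (Hs x y Hxy). lra.
  - apply (convex_of_deriv _ (fun x => ph x - mu * x)).
    + intros x. apply (is_derive_minus (fun x => RInt ph 0 x) (fun x => mu / 2 * x ^ 2)); [apply Hd|].
      auto_derive; auto. match goal with |- ?a = ?c => change (@eq R a c) end. field.
    + intros x y Hxy. specialize (Hs x y Hxy). lra.
Qed.

Lemma total_decrease L mu g h N tail (f : R -> R) k : 0 < L -> mu <= 0 -> 0 < g ->
  (forall i, (i < N)%nat -> 0 < h i <= 1) ->
  (forall x, x <= xpos L g h N -> tail x = 0) -> (k <= N)%nat ->
  (forall x, is_derive f x (phi L mu g h N tail x)) ->
  f (xpos L g h k) - f (xpos L g h 0) = - (g ^ 2 / (2 * L)) * sum_lt (fun i => pfun (h i) (mu / L)) k.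
Proof.
  intros HL Hmu Hg Hh Ht Hk Hf. induction k.
  - simpl. ring.
  - simpl sum_lt. rewrite Rmult_plus_distr_l.
    rewrite <- (step_decrease L mu g h N tail f k) by (auto; lia).
    rewrite <- IHk by lia. field.
Qed.

Lemma gd_iter_pos L mu g h N tail (f : R -> R) i : 0 < L -> mu <= 0 -> 0 < g ->
  (forall i, (i < N)%nat -> 0 < h i <= 1) ->
  (forall x, x <= xpos L g h N -> tail x = 0) -> (i <= N)%nat ->
  (forall x, is_derive f x (phi L mu g h N tail x)) ->
  gd_iter f L h 0 i = xpos L g h i /\ Derive f (gd_iter f L h 0 i) = - g.
Proof.
  intros HL Hmu Hg Hh Ht Hi Hf.
  assert (HD : forall j, (j <= N)%nat -> Derive f (xpos L g h j) = - g).
  { intros j Hj. rewrite (is_derive_unique _ _ _ (Hf _)).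
    apply (phi_at_pos L mu g h N tail j); auto. }
  induction i.
  - simpl. split; auto. apply (HD 0%nat). lia.
  - assert (E : gd_iter f L h 0 (S i) = xpos L g h (S i)).
    { simpl. destruct IHi as [E1 E2]; [lia|]. rewrite E2, E1. field. lra. }
    split; auto. rewrite E. apply HD; auto.
Qed.

Lemma min_upto_const (G : nat -> R) c n : (forall i, (i <= n)%nat -> G i = c) -> min_upto G n = c.
Proof.
  intros H. induction n; simpl. apply H; lia.
  rewrite IHn by (intros; apply H; lia). rewrite H by lia. unfold Rmin; destruct Rle_dec; lra.
Qed.

Lemma pfun_pos L mu hh : 0 < L -> mu <= 0 -> 0 < hh <= 1 -> 0 < pfun hh (mu / L).
Proof.
  intros HL Hmu Hh. pose proof (cc_bounds L mu HL Hmu) as Hc.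
  assert (E : - (mu / L) / (1 - mu / L) = cc L mu) by (unfold cc; field; split; lra).
  unfold pfun. rewrite E. nra.
Qed.

Lemma sum_pos L mu h N : 0 < L -> mu <= 0 -> (1 <= N)%nat ->
  (forall i, (i < N)%nat -> 0 < h i <= 1) -> 0 < sum_lt (fun i => pfun (h i) (mu / L)) N.
Proof.
  intros HL Hmu HN Hh. induction N. lia.
  simpl. assert (0 < pfun (h N) (mu / L)) by (apply pfun_pos; auto).
  destruct N. simpl; lra.
  assert (0 < sum_lt (fun i => pfun (h i) (mu / L)) (S N)) by (apply IHN; auto; lia). lra.
Qed.


Definition tail2 L g (h : nat -> R) N (x : R) : R :=
  Rmin (Rmax 0 (L * (x - xpos L g h N) + 0)) (0 * (x - 0) + g).

Lemma deriv_f L mu g h N tail : 0 < L -> mu <= 0 -> SB mu L tail ->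
  forall x, is_derive (fun x => RInt (phi L mu g h N tail) 0 x) x (phi L mu g h N tail x).
Proof.
  intros HL Hmu Ht x. apply is_derive_RInt_all. intros z.
  apply (SB_cont mu L); auto; try lra. apply SB_phi; auto; lra.
Qed.

Lemma part1 (L mu Delta : R) (N : nat) (h : nat -> R) :
  0 < L -> mu <= 0 -> (1 <= N)%nat ->
  (forall i, (i < N)%nat -> 0 < h i <= 1) ->
  0 < Delta ->
  let kappa := mu / L in
  (exists (f : R -> R) (x0 : R),
      F_class mu L f /\
      f x0 - f (gd_iter f L h x0 N) = Delta /\
      min_upto (fun i => (Derive f (gd_iter f L h x0 i)) ^ 2) N =
        2 * L * Delta / sum_lt (fun i => pfun (h i) kappa) N).
Proof.
  intros HL Hmu HN Hh HD kappa. unfold kappa.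
  pose proof (sum_pos L mu h N HL Hmu HN Hh) as HS.
  set (S := sum_lt (fun i => pfun (h i) (mu / L)) N) in *.
  assert (Hq : 0 < 2 * L * Delta / S) by (apply Rdiv_lt_0_compat; nra).
  set (g := sqrt (2 * L * Delta / S)).
  assert (Hg : 0 < g) by (apply sqrt_lt_R0; auto).
  assert (Hg2 : g ^ 2 = 2 * L * Delta / S) by (apply pow2_sqrt; lra).
  set (tl := fun _ : R => 0).
  assert (Htl : SB mu L tl) by (apply SB_const; lra).
  assert (Ht0 : forall x, x <= xpos L g h N -> tl x = 0) by (intros; reflexivity).
  set (f := fun x => RInt (phi L mu g h N tl) 0 x).
  pose proof (deriv_f L mu g h N tl HL Hmu Htl) as Hf.
  exists f, 0. split; [|split].
  - apply F_class_of; auto. apply SB_phi; auto; lra.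
  - destruct (gd_iter_pos L mu g h N tl f N) as [E _]; auto.
    rewrite E.
    pose proof (total_decrease L mu g h N tl f N HL Hmu Hg Hh Ht0 (le_n _) Hf) as T.
    simpl xpos in T. fold S in T.
    assert (E2 : f 0 - f (xpos L g h N) = g ^ 2 / (2 * L) * S) by lra.
    rewrite E2, Hg2. field. split; lra.
  - rewrite <- Hg2. apply min_upto_const. intros i Hi.
    destruct (gd_iter_pos L mu g h N tl f i) as [_ E]; auto.
    rewrite E. ring.
Qed.


Lemma part2 (L mu Delta : R) (N : nat) (h : nat -> R) :
  0 < L -> mu <= 0 -> (1 <= N)%nat ->
  (forall i, (i < N)%nat -> 0 < h i <= 1) ->
  0 < Delta ->
  let kappa := mu / L in
  (exists (f : R -> R) (x0 xstar : R),
      F_class mu L f /\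
      (forall y, f xstar <= f y) /\
      f x0 - f xstar = Delta /\
      min_upto (fun i => (Derive f (gd_iter f L h x0 i)) ^ 2) N =
        2 * L * Delta / (1 + sum_lt (fun i => pfun (h i) kappa) N)).
Proof.
  intros HL Hmu HN Hh HD kappa. unfold kappa.
  pose proof (sum_pos L mu h N HL Hmu HN Hh) as HS.
  set (Ssum := sum_lt (fun i => pfun (h i) (mu / L)) N) in *.
  assert (Hq : 0 < 2 * L * Delta / (1 + Ssum)) by (apply Rdiv_lt_0_compat; nra).
  set (g := sqrt (2 * L * Delta / (1 + Ssum))).
  assert (Hg : 0 < g) by (apply sqrt_lt_R0; auto).
  assert (Hg2 : g ^ 2 = 2 * L * Delta / (1 + Ssum)) by (apply pow2_sqrt; lra).
  set (P := xpos L g h N).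
  set (tl := tail2 L g h N).
  assert (Htl : SB mu L tl).
  { unfold tl, tail2. apply SB_min; [apply SB_max; [apply SB_const; lra|apply SB_lin; lra]|apply SB_lin; lra]. }
  assert (Ht0 : forall x, x <= P -> tl x = 0).
  { intros x Hx. unfold tl, tail2. fold P. unfold Rmin, Rmax; repeat destruct Rle_dec; nra. }
  assert (Htb : forall x, 0 <= tl x <= g).
  { intros x. unfold tl, tail2. unfold Rmin, Rmax; repeat destruct Rle_dec; nra. }
  assert (Hphi_r : forall x, P <= x -> phi L mu g h N tl x = - g + tl x).
  { intros x Hx. unfold phi. rewrite M_zero.
    - specialize (Htb x). unfold Rmax; destruct Rle_dec; lra.
    - intros j Hj. apply (T_zero_r L mu g h N j); auto.
      assert (xpos L g h (S j) <= P) by (apply (pos_mono L g h N); auto; lia). lra. }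
  set (xs := P + g / L).
  assert (Hgl : 0 < g / L) by (apply Rdiv_lt_0_compat; lra).
  set (f := fun x => RInt (phi L mu g h N tl) 0 x).
  pose proof (deriv_f L mu g h N tl HL Hmu Htl) as Hf.
  assert (Hphi_le : forall x, phi L mu g h N tl x <= 0).
  { intros x. unfold phi. pose proof (M_le L mu g h N N x HL Hmu Hg Hh (le_n _)).
    specialize (Htb x). unfold Rmax; destruct Rle_dec; lra. }
  assert (Hphi_0 : forall x, xs <= x -> phi L mu g h N tl x = 0).
  { intros x Hx. rewrite Hphi_r by (unfold xs in Hx; lra).
    unfold tl, tail2. fold P. unfold xs in Hx.
    assert (L * (x - P) >= g).
    { assert (L * (g / L) = g) by (field; lra). nra. }
    unfold Rmin, Rmax; repeat destruct Rle_dec; nra. }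
  assert (Htail : f xs - f P = - (g ^ 2 / (2 * L))).
  { rewrite (piece f (fun x => (- g) * (x - P) + L * (x - P) ^ 2 / 2)
             (phi L mu g h N tl) (fun x => (- g) + L * (x - P)) P xs);
      [ | exact Hf | intros; apply quad_deriv | unfold xs; lra | ].
    - cbv beta. unfold xs. field. lra.
    - intros x Hx. rewrite Hphi_r by lra. unfold tl, tail2. fold P. unfold xs in Hx.
      assert (L * (g / L) = g) by (field; lra).
      assert (L * (x - P) <= g) by nra.
      unfold Rmin, Rmax; repeat destruct Rle_dec; nra. }
  exists f, 0, xs. split; [|split; [|split]].
  - apply F_class_of; auto. apply SB_phi; auto; lra.
  - intros y. destruct (Rle_dec y xs) as [Hy|Hy].
    + destruct (MVT' f (phi L mu g h N tl) y xs Hf Hy) as [c [_ E]].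
      specialize (Hphi_le c). nra.
    + destruct (MVT' f (phi L mu g h N tl) xs y Hf) as [c [Hc E]]; [lra|].
      rewrite Hphi_0 in E by lra. lra.
  - pose proof (total_decrease L mu g h N tl f N HL Hmu Hg Hh Ht0 (le_n _) Hf) as T.
    simpl xpos in T. fold Ssum in T. fold P in T.
    assert (E2 : f 0 - f xs = g ^ 2 / (2 * L) * (1 + Ssum)) by (field_simplify; field_simplify in T; field_simplify in Htail; lra).
    rewrite E2, Hg2. field. split; lra.
  - rewrite <- Hg2. apply min_upto_const. intros i Hi.
    destruct (gd_iter_pos L mu g h N tl f i) as [_ E]; auto.
    rewrite E. ring.
Qed.

Theorem proposition4p3 (L mu Delta : R) (N : nat) (h : nat -> R) :
  0 < L -> mu <= 0 -> (1 <= N)%nat ->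
  (forall i, (i < N)%nat -> 0 < h i <= 1) ->
  0 < Delta ->
  let kappa := mu / L in
  (exists (f : R -> R) (x0 : R),
      F_class mu L f /\
      f x0 - f (gd_iter f L h x0 N) = Delta /\
      min_upto (fun i => (Derive f (gd_iter f L h x0 i)) ^ 2) N =
        2 * L * Delta / sum_lt (fun i => pfun (h i) kappa) N) /\
  (exists (f : R -> R) (x0 xstar : R),
      F_class mu L f /\
      (forall y, f xstar <= f y) /\
      f x0 - f xstar = Delta /\
      min_upto (fun i => (Derive f (gd_iter f L h x0 i)) ^ 2) N =
        2 * L * Delta / (1 + sum_lt (fun i => pfun (h i) kappa) N)).
Proof.
  intros HL Hmu HN Hh HD kappa. split.
  - exact (part1 L mu Delta N h HL Hmu HN Hh HD).
  - exact (part2 L mu Delta N h HL Hmu HN Hh HD).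
Qed.
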